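(* Let $\{q_k:k\ge0\}$ be a non-decreasing sequence of nonnegative numbers with $q_0>0$ satisfying $\frac{q_{n-1}}{Q_n}=O(1/n)$ as $n\to\infty$. There is a constant $c>0$ such that for all $N\in\mathbb N$ and all $n\ge M_N$: (i) if $x\in I_N^{k,l}$ with $0\le k\le N-2$ and $k+1\le l\le N-1$, then $$\int_{I_N}|F_n(x-t)|\,d\mu(t)\le\frac{cM_lM_k}{nM_N};$$ (ii) if $x\in I_N^{k,N}$ with $0\le k\le N-1$, then $$\int_{I_N}|F_n(x-t)|\,d\mu(t)\le\frac{cM_k}{M_N}.$$
   Context: Let $m=(m_0,m_1,\dots)$ be a bounded sequence of integers $m_k\ge 2$; $G_m=\prod_k Z_{m_k}$ (a compact abelian group under coordinatewise addition mod $m_k$) with Haar probability measure $\mu$; $M_0=1$, $M_{k+1}=m_kM_k$, $n=\sum_j n_jM_j$ with $n_j\in Z_{m_j}$. $I_N=\{x: x_0=\dots=x_{N-1}=0\}$. For $0\le k<l<N$, $I_N^{k,l}$ is the set of $x\in G_m$ with $x_0=\dots=x_{k-1}=0$, $x_k\ne0$, $x_{k+1}=\dots=x_{l-1}=0$, $x_l\ne0$ (other coordinates arbitrary); for $0\le k<N$, $I_N^{k,N}$ is the set of $x$ with $x_0=\dots=x_{k-1}=0$, $x_k\ne 0$, $x_{k+1}=\dots=x_{N-1}=0$. $r_k(x)=\exp(2\pi i x_k/m_k)$, $\psi_n=\prod_k r_k^{n_k}$, $D_n=\sum_{k=0}^{n-1}\psi_k$. $Q_n=\sum_{k=0}^{n-1}q_k$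 and $F_n=\frac1{Q_n}\sum_{k=1}^nq_{n-k}D_k$. *)

(* Defs.v *)
From Stdlib Require Import Reals Arith.
Open Scope R_scope.

Fixpoint sumR (n : nat) (f : nat -> R) : R :=
  match n with O => 0 | S n' => sumR n' f + f n' end.

Fixpoint Mseq (m : nat -> nat) (k : nat) : nat :=
  match k with O => 1%nat | S k' => (m k' * Mseq m k')%nat end.

Definition digit (m : nat -> nat) (n j : nat) : nat :=
  ((n / Mseq m j) mod (m j))%nat.

Definition inG (m : nat -> nat) (x : nat -> nat) : Prop := forall k, (x k < m k)%nat.

Definition subG (m : nat -> nat) (x t : nat -> nat) : nat -> nat :=
  fun k => ((x k + (m k - t k)) mod (m k))%nat.

(* psi_n(x) = prod_k r_k(x)^{n_k} = exp(2 pi i sum_k n_k x_k / m_k).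
   n_k = 0 for k > n (as M_k >= 2^k > n when all m_j >= 2), so the sum is finite. *)
Definition theta (m : nat -> nat) (n : nat) (x : nat -> nat) : R :=
  2 * PI * sumR (S n) (fun j => INR (digit m n j * x j) / INR (m j)).
Definition psi_re m n x : R := cos (theta m n x).
Definition psi_im m n x : R := sin (theta m n x).

Definition D_re m n x : R := sumR n (fun k => psi_re m k x).
Definition D_im m n x : R := sumR n (fun k => psi_im m k x).

Definition Qs (q : nat -> R) (n : nat) : R := sumR n q.

Definition F_re m q n x : R :=
  / Qs q n * sumR n (fun i => q (n - S i)%nat * D_re m (S i) x).
Definition F_im m q n x : R :=
  / Qs q n * sumR n (fun i => q (n - S i)%nat * D_im m (S i) x).
Definition F_abs m q n x : R := sqrt (F_re m q n x ^ 2 + F_im m q n x ^ 2).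

(* sumcyl m j cnt g = sum of g t over all t with t_i ranging over Z_{m_i}
   for j <= i < j+cnt and t_i = 0 for all other i. *)
Fixpoint sumcyl (m : nat -> nat) (j cnt : nat) (g : (nat -> nat) -> R) : R :=
  match cnt with
  | O => g (fun _ => 0%nat)
  | S c => sumR (m j) (fun a =>
             sumcyl m (S j) c (fun t => g (fun i => if Nat.eqb i j then a else t i)))
  end.

(* Haar integral over I_N of a function depending only on coordinates < K
   (K >= N): each cylinder {t : t_0..t_{K-1} fixed} has Haar measure 1/M_K. *)
Definition int_IN (m : nat -> nat) (N K : nat) (f : (nat -> nat) -> R) : R :=
  / INR (Mseq m K) * sumcyl m N (K - N) f.

(* int_{I_N} |F_n(x - t)| dmu(t).  For k < n <= M_{N+n}, psi_k depends only on
   coordinates < N+n, hence so does t |-> F_n(x-t). *)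
Definition intF (m : nat -> nat) (q : nat -> R) (N n : nat) (x : nat -> nat) : R :=
  int_IN m N (N + n) (fun t => F_abs m q n (subG m x t)).

Definition I_kl (k l : nat) (x : nat -> nat) : Prop :=
  (forall j, (j < k)%nat -> x j = 0%nat) /\ x k <> 0%nat /\
  (forall j, (k < j)%nat -> (j < l)%nat -> x j = 0%nat) /\ x l <> 0%nat.

Definition I_kN (N k : nat) (x : nat -> nat) : Prop :=
  (forall j, (j < k)%nat -> x j = 0%nat) /\ x k <> 0%nat /\
  (forall j, (k < j)%nat -> (j < N)%nat -> x j = 0%nat).

(* Main.v *)
Require Import Defs.
From Stdlib Require Import Reals Arith Lia Lra.
From Coquelicot Require Import Coquelicot.
Open Scope R_scope.
Open Scope R_scope.

Fixpoint sumC (n:nat) (f: nat -> C) : C :=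
  match n with O => RtoC 0 | S n' => Cplus (sumC n' f) (f n') end.

Lemma sumC_ext n f g : (forall i, (i < n)%nat -> f i = g i) -> sumC n f = sumC n g.
Proof. induction n; simpl; intros H; auto. rewrite IHn by (intros; apply H; lia). rewrite H by lia; auto. Qed.

Lemma sumR_ext n f g : (forall i, (i < n)%nat -> f i = g i) -> sumR n f = sumR n g.
Proof. induction n; simpl; intros H; auto. rewrite IHn by (intros; apply H; lia). rewrite H by lia; auto. Qed.

Lemma sumR_le n f g : (forall i, (i < n)%nat -> f i <= g i) -> sumR n f <= sumR n g.
Proof. induction n; simpl; intros H. lra. apply Rplus_le_compat. apply IHn; intros; apply H; lia. apply H; lia. Qed.

Lemma sumR_const n c : sumR n (fun _ => c) = INR n * c.
Proof. induction n; simpl sumR. simpl; ring. rewrite IHn, S_INR; ring. Qed.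

Lemma sumR_scal n c f : sumR n (fun i => c * f i) = c * sumR n f.
Proof. induction n; simpl. ring. rewrite IHn; ring. Qed.

Lemma sumR_shift n g : sumR (S n) g = g 0%nat + sumR n (fun i => g (S i)).
Proof. induction n. simpl; ring. change (sumR (S (S n)) g) with (sumR (S n) g + g (S n)).
 rewrite IHn. simpl. ring. Qed.

Lemma sumR_rev n f : sumR n (fun i => f (n - S i)%nat) = sumR n f.
Proof. induction n. reflexivity. rewrite sumR_shift.
 replace (S n - 1)%nat with n by lia. simpl (sumR (S n) f).
 rewrite <- IHn. rewrite Rplus_comm. f_equal. Qed.

Lemma sumC_fst n f : fst (sumC n f) = sumR n (fun i => fst (f i)).
Proof. induction n; simpl; auto. rewrite IHn; auto. Qed.
Lemma sumC_snd n f : snd (sumC n f) = sumR n (fun i => snd (f i)).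
Proof. induction n; simpl; auto. rewrite IHn; auto. Qed.

Lemma sumC_add n p f : sumC (n + p) f = Cplus (sumC n f) (sumC p (fun a => f (n + a)%nat)).
Proof. induction p. rewrite Nat.add_0_r; simpl. ring.
 rewrite Nat.add_succ_r; simpl. rewrite IHp. ring. Qed.

Lemma sumC_blocks w P f : sumC (w * P) f = sumC w (fun v => sumC P (fun a => f (v * P + a)%nat)).
Proof. induction w. reflexivity. change (S w * P)%nat with (P + w * P)%nat.
 rewrite Nat.add_comm, sumC_add, IHw. simpl. reflexivity. Qed.

Lemma sumC_scal n z f : sumC n (fun i => Cmult z (f i)) = Cmult z (sumC n f).
Proof. induction n; simpl. ring. rewrite IHn; ring. Qed.

Lemma sumC_zero n f : (forall i, (i < n)%nat -> f i = RtoC 0) -> sumC n f = RtoC 0.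
Proof. induction n; simpl; intros H; auto. rewrite IHn, H by (try intros; try apply H; lia). ring. Qed.

Lemma Cmod_sumC n f : Cmod (sumC n f) <= sumR n (fun i => Cmod (f i)).
Proof. induction n; simpl. rewrite Cmod_0; lra.
 eapply Rle_trans. apply Cmod_triangle. lra. Qed.
Open Scope R_scope.

Open Scope nat_scope.
Section Dig.
Variable m : nat -> nat.
Hypothesis Hm2 : forall k, 2 <= m k.

Lemma Mpos j : 1 <= Mseq m j.
Proof. induction j; simpl; auto. specialize (Hm2 j); nia. Qed.

Lemma Mgt j : j < Mseq m j.
Proof. induction j; simpl; auto. specialize (Hm2 j); nia. Qed.

Lemma Msplit j d : exists R, Mseq m (j + d) = R * Mseq m j.
Proof. induction d. exists 1; rewrite Nat.add_0_r; lia.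
 destruct IHd as [R HR]. exists (m (j+d) * R). rewrite Nat.add_succ_r; simpl. rewrite HR; ring. Qed.

Lemma Mle j s : j <= s -> Mseq m j <= Mseq m s.
Proof. intros H. replace s with (j + (s - j)) by lia. destruct (Msplit j (s-j)) as [R HR].
 rewrite HR. destruct R. simpl in HR. pose proof (Mpos (j + (s-j))). lia. nia. Qed.

Lemma digit_small u j : u < Mseq m j -> digit m u j = 0.
Proof. intros H; unfold digit. rewrite Nat.div_small by auto. apply Nat.Div0.mod_0_l. Qed.

Lemma digit_add a s v j : a < Mseq m s ->
  digit m (a + Mseq m s * v) j = digit m a j + digit m (Mseq m s * v) j.
Proof. intros Ha. unfold digit. pose proof (Mpos j) as Hj. pose proof (Mpos s) as Hs.
 destruct (Nat.lt_ge_cases j s) as [Hjs|Hjs].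
 - destruct (Msplit (S j) (s - S j)) as [R HR]. replace (S j + (s - S j)) with s in HR by lia.
   simpl in HR. rewrite HR.
   replace (a + R * (m j * Mseq m j) * v) with (a + (R * v * m j) * Mseq m j) by ring.
   replace (R * (m j * Mseq m j) * v) with (0 + (R * v * m j) * Mseq m j) by ring.
   rewrite !Nat.div_add by lia. rewrite Nat.Div0.div_0_l.
   rewrite Nat.Div0.mod_add. rewrite Nat.add_0_l, Nat.Div0.mod_mul. lia.
 - destruct (Msplit s (j - s)) as [R HR]. replace (s + (j - s)) with j in HR by lia.
   assert (HR1 : 1 <= R) by (destruct R; simpl in HR; lia).
   rewrite HR. rewrite (Nat.div_small a) by nia. rewrite Nat.Div0.mod_0_l.
   rewrite (Nat.mul_comm R), <- !Nat.Div0.div_div.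
   replace (a + Mseq m s * v) with (a + v * Mseq m s) by ring.
   rewrite Nat.div_add by lia. rewrite (Nat.div_small a (Mseq m s)) by lia.
   rewrite (Nat.mul_comm _ v), Nat.div_mul by lia. simpl. reflexivity.
Qed.

Lemma digit_single s c j : c < m s ->
  digit m (Mseq m s * c) j = if Nat.eqb j s then c else 0.
Proof. intros Hc. unfold digit. pose proof (Mpos j) as Hj. pose proof (Mpos s) as Hs.
 destruct (Nat.lt_total j s) as [Hjs|[Hjs|Hjs]].
 - destruct (Msplit (S j) (s - S j)) as [R HR]. replace (S j + (s - S j)) with s in HR by lia.
   simpl in HR. rewrite HR. replace (Nat.eqb j s) with false by (symmetry; apply Nat.eqb_neq; lia).
   replace (R * (m j * Mseq m j) * c) with ((R * c * m j) * Mseq m j) by ring.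
   rewrite Nat.div_mul by lia. apply Nat.Div0.mod_mul.
 - subst. rewrite Nat.eqb_refl. rewrite Nat.mul_comm, Nat.div_mul by lia. apply Nat.mod_small; auto.
 - destruct (Msplit (S s) (j - S s)) as [R HR]. replace (S s + (j - S s)) with j in HR by lia.
   simpl in HR. rewrite HR. replace (Nat.eqb j s) with false by (symmetry; apply Nat.eqb_neq; lia).
   rewrite Nat.div_small. apply Nat.Div0.mod_0_l.
   pose proof (Hm2 s). destruct R. simpl in HR. pose proof (Mpos j); lia. nia.
Qed.
End Dig.
Open Scope R_scope.

Lemma sumR_plus n f g : sumR n (fun i => f i + g i) = sumR n f + sumR n g.
Proof. induction n; simpl. ring. rewrite IHn; ring. Qed.

Lemma sumR_zero_tail n L f : (n <= L)%nat -> (forall j, (n <= j < L)%nat -> f j = 0) -> sumR L f = sumR n f.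
Proof. intros H. induction L; intros Hz. replace n with 0%nat by lia. auto.
 destruct (Nat.eq_dec n (S L)). subst; auto. simpl. rewrite Hz by lia. rewrite IHL. ring. lia.
 intros; apply Hz; lia. Qed.

Lemma sumR_single L s g : (s < L)%nat -> sumR L (fun j => if Nat.eqb j s then g else 0) = g.
Proof. induction L; intros H. lia. simpl. destruct (Nat.eq_dec s L).
 subst. rewrite Nat.eqb_refl. rewrite sumR_zero_tail with (n := 0%nat). simpl; ring. lia.
 intros j Hj. replace (Nat.eqb j L) with false by (symmetry; apply Nat.eqb_neq; lia). auto.
 replace (Nat.eqb L s) with false by (symmetry; apply Nat.eqb_neq; lia). rewrite IHL by lia. ring. Qed.

Section Psi.
Variable m : nat -> nat.
Hypothesis Hm2 : forall k, (2 <= m k)%nat.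

Definition thetaL L u y := 2 * PI * sumR L (fun j => INR (digit m u j * y j) / INR (m j)).

Lemma theta_L L u y : (S u <= L)%nat -> theta m u y = thetaL L u y.
Proof. intros H. unfold theta, thetaL. f_equal. symmetry. apply sumR_zero_tail; auto.
 intros j Hj. rewrite digit_small; auto. simpl. unfold Rdiv; ring.
 pose proof (Mgt m Hm2 j). lia. Qed.

Lemma theta_add a s v y : (a < Mseq m s)%nat ->
  theta m (a + Mseq m s * v) y = theta m a y + theta m (Mseq m s * v) y.
Proof. intros Ha. set (L := S (a + Mseq m s * v)).
 rewrite !(theta_L L) by (unfold L; lia). unfold thetaL. rewrite <- Rmult_plus_distr_l. f_equal.
 rewrite <- sumR_plus. apply sumR_ext; intros j _. rewrite digit_add by auto.
 rewrite Nat.mul_add_distr_r, plus_INR. unfold Rdiv; ring. Qed.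

Lemma theta_single s c y : (c < m s)%nat ->
  theta m (Mseq m s * c) y = 2 * PI * (INR c * INR (y s) / INR (m s)).
Proof. intros Hc. set (L := S (Mseq m s * c + s)).
 rewrite (theta_L L) by (unfold L; lia). unfold thetaL. f_equal.
 rewrite <- (sumR_single L s). apply sumR_ext; intros j _. rewrite digit_single by auto.
 destruct (Nat.eqb_spec j s). subst. rewrite mult_INR; auto. simpl. unfold Rdiv; ring.
 unfold L; lia. Qed.

Definition psiC u y : C := (psi_re m u y, psi_im m u y).

Lemma psi_mult a s v y : (a < Mseq m s)%nat ->
  psiC (a + Mseq m s * v) y = Cmult (psiC a y) (psiC (Mseq m s * v) y).
Proof. intros Ha. unfold psiC, psi_re, psi_im, Cmult; simpl. rewrite theta_add by auto.
 rewrite cos_plus, sin_plus. f_equal; ring. Qed.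

Lemma psi_norm u y : Cmod (psiC u y) = 1.
Proof. unfold Cmod, psiC; simpl fst; simpl snd.
 pose proof (sin2_cos2 (theta m u y)). unfold Rsqr in H.
 assert (E : psi_re m u y ^ 2 + psi_im m u y ^ 2 = 1).
 { unfold psi_re, psi_im. rewrite <- H. ring. }
 rewrite E. apply sqrt_1. Qed.

Lemma sumC_tele n (f : nat -> C) : sumC n (fun c => Cminus (f (S c)) (f c)) = Cminus (f n) (f 0%nat).
Proof. induction n; simpl. unfold Cminus; ring. rewrite IHn. unfold Cminus; ring. Qed.

Lemma geom_zero s y : (0 < y s < m s)%nat ->
  sumC (m s) (fun c => psiC (Mseq m s * c) y) = RtoC 0.
Proof. intros Hy. set (phi := 2 * PI * (INR (y s) / INR (m s))).
 set (w := fun c : nat => (cos (INR c * phi), sin (INR c * phi)) : C).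
 set (z := (cos phi, sin phi) : C).
 assert (Hw : forall c, (c < m s)%nat -> psiC (Mseq m s * c) y = w c).
 { intros c Hc. unfold psiC, psi_re, psi_im, w. rewrite theta_single by auto.
   replace (2 * PI * (INR c * INR (y s) / INR (m s))) with (INR c * phi) by (unfold phi, Rdiv; ring). auto. }
 rewrite (sumC_ext _ _ w) by auto.
 assert (Hm : 0 < INR (m s)) by (apply lt_0_INR; lia).
 assert (Hz : z <> RtoC 1).
 { intros E. assert (cos phi = 1) by (unfold z in E; injection E; auto).
   assert (0 < phi / 2 < PI).
   { pose proof PI_RGT_0. assert (0 < INR (y s)) by (apply lt_0_INR; lia).
     assert (INR (y s) < INR (m s)) by (apply lt_INR; lia).
     unfold phi. split. apply Rmult_lt_0_compat; try lra. apply Rmult_lt_0_compat; try lra.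
     apply Rdiv_lt_0_compat; lra.
     assert (INR (y s) / INR (m s) < 1). apply Rmult_lt_reg_r with (INR (m s)); auto.
     unfold Rdiv; rewrite Rmult_assoc, Rinv_l; lra. nra. }
   pose proof (sin_gt_0 (phi/2) (proj1 H0) (proj2 H0)).
   replace phi with (2 * (phi/2)) in H by field. rewrite cos_2a_sin in H. nra. }
 assert (Hstep : forall c, w (S c) = Cmult (w c) z).
 { intros c. unfold w, z, Cmult. rewrite S_INR. simpl.
   replace ((INR c + 1) * phi) with (INR c * phi + phi) by ring. rewrite cos_plus, sin_plus. f_equal; ring. }
 assert (Hend : w (m s) = w 0%nat).
 { unfold w. replace (INR (m s) * phi) with (0 + 2 * INR (y s) * PI) by (unfold phi; field; lra).
   rewrite cos_period, sin_period. simpl. rewrite Rmult_0_l. auto. }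
 assert (E : Cmult (sumC (m s) w) (Cminus z 1) = RtoC 0).
 { rewrite Cmult_comm, <- sumC_scal.
   rewrite (sumC_ext _ _ (fun c => Cminus (w (S c)) (w c))).
   rewrite sumC_tele, Hend. unfold Cminus; ring.
   intros c _. rewrite Hstep. unfold Cminus; ring. }
 assert (Hz1 : Cminus z 1 <> RtoC 0).
 { intros E2. apply Hz. replace z with (Cplus (Cminus z 1) 1) by (unfold Cminus; ring). rewrite E2. ring. }
 transitivity (Cmult (Cmult (sumC (m s) w) (Cminus z 1)) (Cinv (Cminus z 1))).
 rewrite <- Cmult_assoc, Cinv_r by auto. ring. rewrite E. ring.
Qed.
End Psi.
Open Scope R_scope.

Lemma sumC_scal_r n z f : sumC n (fun i => Cmult (f i) z) = Cmult (sumC n f) z.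
Proof. induction n; simpl. ring. rewrite IHn; ring. Qed.

Section Blocks.
Variable m : nat -> nat.
Hypothesis Hm2 : forall k, (2 <= m k)%nat.
Variable y : nat -> nat.
Let ps u := psiC m u y.

Lemma GL s (G : nat -> C) :
  (forall w a, (a < Mseq m s)%nat -> G (w * Mseq m s + a)%nat = Cmult (ps (w * Mseq m s)%nat) (G a)) ->
  forall w b, (b <= Mseq m s)%nat ->
  sumC (w * Mseq m s + b) G =
  Cplus (sumC w (fun v => Cmult (ps (v * Mseq m s)%nat) (sumC (Mseq m s) G)))
        (Cmult (ps (w * Mseq m s)%nat) (sumC b G)).
Proof. intros Hg w b Hb. rewrite sumC_add, sumC_blocks. f_equal.
 apply sumC_ext; intros v _. rewrite <- sumC_scal. apply sumC_ext; intros a Ha. auto.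
 rewrite <- sumC_scal. apply sumC_ext; intros a Ha. apply Hg; lia. Qed.

Lemma ps_mult s w a : (a < Mseq m s)%nat -> ps (w * Mseq m s + a)%nat = Cmult (ps (w * Mseq m s)%nat) (ps a).
Proof. intros Ha. unfold ps. replace (w * Mseq m s + a)%nat with (a + Mseq m s * w)%nat by ring.
 rewrite psi_mult by auto. rewrite Nat.mul_comm. apply Cmult_comm. Qed.

Definition DC i := sumC i ps.
Definition TC j := sumC j DC.

Lemma D_red s : DC (Mseq m s) = RtoC 0 ->
  forall w a, (a < Mseq m s)%nat -> DC (w * Mseq m s + a)%nat = Cmult (ps (w * Mseq m s)%nat) (DC a).
Proof. intros H0 w a Ha. unfold DC. rewrite (GL s ps (ps_mult s)) by lia.
 fold (DC (Mseq m s)). rewrite H0. rewrite sumC_zero. ring. intros; ring. Qed.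

Lemma geom' s : (0 < y s < m s)%nat -> sumC (m s) (fun v => ps (v * Mseq m s)%nat) = RtoC 0.
Proof. intros H. rewrite <- (geom_zero m Hm2 s y H). apply sumC_ext; intros; unfold ps; rewrite Nat.mul_comm; auto. Qed.

Lemma D_next s : DC (Mseq m (S s)) = Cmult (sumC (m s) (fun v => ps (v * Mseq m s)%nat)) (DC (Mseq m s)).
Proof. unfold DC. simpl Mseq. rewrite <- (Nat.add_0_r (m s * Mseq m s)).
 rewrite (GL s ps (ps_mult s)) by lia. simpl sumC. rewrite sumC_scal_r. ring. Qed.

Lemma D_zero k s : (0 < y k < m k)%nat -> (S k <= s)%nat -> DC (Mseq m s) = RtoC 0.
Proof. intros Hy Hs. induction Hs. rewrite D_next, geom' by auto. ring.
 rewrite D_next, IHHs. ring. Qed.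

Lemma T_next s : DC (Mseq m s) = RtoC 0 ->
  TC (Mseq m (S s)) = Cmult (sumC (m s) (fun v => ps (v * Mseq m s)%nat)) (TC (Mseq m s)).
Proof. intros H0. unfold TC. simpl Mseq. rewrite <- (Nat.add_0_r (m s * Mseq m s)).
 rewrite (GL s DC (D_red s H0)) by lia. simpl sumC. rewrite sumC_scal_r. ring. Qed.

Lemma red_mod s (G : nat -> C) :
  (forall w a, (a < Mseq m s)%nat -> G (w * Mseq m s + a)%nat = Cmult (ps (w * Mseq m s)%nat) (G a)) ->
  sumC (Mseq m s) G = RtoC 0 ->
  forall j, Cmod (sumC j G) = Cmod (sumC (j mod Mseq m s) G).
Proof. intros Hg H0 j. pose proof (Mpos m Hm2 s).
 rewrite (Nat.div_mod_eq j (Mseq m s)) at 1. rewrite Nat.mul_comm.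
 rewrite (GL s G Hg). rewrite H0. rewrite sumC_zero. rewrite Cplus_0_l, Cmult_comm, Cmod_mult.
 unfold ps; rewrite psi_norm; ring. intros; ring.
 pose proof (Nat.mod_upper_bound j (Mseq m s)); lia. Qed.

Lemma D_bound_small a : Cmod (DC a) <= INR a.
Proof. unfold DC. eapply Rle_trans. apply Cmod_sumC. rewrite (sumR_ext _ _ (fun _ => 1)).
 rewrite sumR_const; lra. intros; unfold ps; apply psi_norm. Qed.

Lemma D_bound k i : (0 < y k < m k)%nat -> Cmod (DC i) <= INR (Mseq m (S k)).
Proof. intros Hy. unfold DC. rewrite (red_mod (S k) ps (ps_mult (S k))).
 fold (DC (i mod Mseq m (S k))). eapply Rle_trans. apply D_bound_small. apply le_INR.
 pose proof (Mpos m Hm2 (S k)). pose proof (Nat.mod_upper_bound i (Mseq m (S k))); lia.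
 apply (D_zero k); auto. Qed.

Lemma T_bound k l j : (0 < y k < m k)%nat -> (0 < y l < m l)%nat -> (k < l)%nat ->
  Cmod (TC j) <= INR (Mseq m (S l)) * INR (Mseq m (S k)).
Proof. intros Hk Hl Hkl. assert (HDl : DC (Mseq m l) = RtoC 0) by (apply (D_zero k); auto).
 assert (HDl1 : DC (Mseq m (S l)) = RtoC 0) by (apply (D_zero k); auto).
 unfold TC. rewrite (red_mod (S l) DC (D_red (S l) HDl1)).
 eapply Rle_trans. apply Cmod_sumC. eapply Rle_trans. apply sumR_le. intros i _. apply (D_bound k i Hk).
 rewrite sumR_const. apply Rmult_le_compat_r. apply pos_INR. apply le_INR.
 pose proof (Mpos m Hm2 (S l)). pose proof (Nat.mod_upper_bound j (Mseq m (S l))); lia.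
 fold (TC (Mseq m (S l))). rewrite T_next, geom' by auto. ring. Qed.
End Blocks.
Open Scope R_scope.

Fixpoint prodm (m : nat -> nat) (j c : nat) : nat :=
  match c with O => 1%nat | S c' => (m j * prodm m (S j) c')%nat end.

Lemma Mseq_prodm m c : forall j, Mseq m (j + c) = (prodm m j c * Mseq m j)%nat.
Proof. induction c; intros j. rewrite Nat.add_0_r; simpl; lia.
 rewrite Nat.add_succ_r, <- Nat.add_succ_l, IHc. simpl. ring. Qed.

Lemma sumcyl_bound m c : forall j g Bd, 0 <= Bd ->
  (forall t, (forall i, (i < j)%nat -> t i = 0%nat) -> g t <= Bd) ->
  sumcyl m j c g <= INR (prodm m j c) * Bd.
Proof. induction c; intros j g Bd HBd Hg; simpl sumcyl; simpl prodm.
 simpl INR. rewrite Rmult_1_l. apply Hg; auto.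
 eapply Rle_trans. apply sumR_le. intros a _. apply (IHc _ _ Bd). auto.
 intros t Ht. cbv beta. apply Hg. intros i Hi. destruct (Nat.eqb_spec i j). lia. apply Ht; lia.
 rewrite sumR_const, mult_INR. lra. Qed.

Lemma intF_le m q N n x Bd : (forall k, (2 <= m k)%nat) -> 0 <= Bd ->
  (forall t, (forall i, (i < N)%nat -> t i = 0%nat) -> F_abs m q n (subG m x t) <= Bd) ->
  intF m q N n x <= Bd / INR (Mseq m N).
Proof. intros Hm2 HBd H. unfold intF, int_IN. replace (N + n - N)%nat with n by lia.
 pose proof (Mpos m Hm2 N). assert (0 < INR (Mseq m N)) by (apply lt_0_INR; lia).
 rewrite Mseq_prodm, mult_INR.
 assert (0 < INR (prodm m N n)).
 { apply lt_0_INR. pose proof (Mpos m Hm2 (N + n)). rewrite Mseq_prodm in H2. nia. }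
 eapply Rle_trans. apply Rmult_le_compat_l. left; apply Rinv_0_lt_compat; nra.
 apply sumcyl_bound; eauto. right. field. lra. Qed.

Lemma Cmod_RtoC_mult r z : Cmod (Cmult (RtoC r) z) = Rabs r * Cmod z.
Proof. rewrite Cmod_mult, Cmod_R; auto. Qed.

Lemma abel_aux (a : nat -> R) (U : nat -> C) K :
  (forall i, 0 <= a (S i) <= a i) -> (forall i, Cmod (U i) <= K) -> U 0%nat = RtoC 0 ->
  forall p, Cmod (Cminus (sumC (S p) (fun i => Cmult (RtoC (a i)) (Cminus (U (S i)) (U i))))
                         (Cmult (RtoC (a p)) (U (S p)))) <= (a 0%nat - a p) * K.
Proof. intros Ha HU H0. induction p.
 - simpl sumC. rewrite H0. replace (Cminus (Cplus 0 (Cmult (RtoC (a 0%nat)) (Cminus (U 1%nat) 0))) (Cmult (RtoC (a 0%nat)) (U 1%nat))) with (RtoC 0) by (unfold Cminus; ring).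
   rewrite Cmod_0. lra.
 - change (sumC (S (S p)) ?f) with (Cplus (sumC (S p) f) (f (S p))). cbv beta.
   set (X := sumC (S p) _) in *.
   replace (Cminus (Cplus X (Cmult (RtoC (a (S p))) (Cminus (U (S (S p))) (U (S p))))) (Cmult (RtoC (a (S p))) (U (S (S p)))))
     with (Cplus (Cminus X (Cmult (RtoC (a p)) (U (S p)))) (Cmult (RtoC (a p - a (S p))) (U (S p)))).
   2:{ rewrite RtoC_minus. unfold Cminus; ring. }
   eapply Rle_trans. apply Cmod_triangle. rewrite Cmod_RtoC_mult.
   specialize (Ha p). specialize (HU (S p)). rewrite Rabs_pos_eq by lra.
   assert ((a p - a (S p)) * Cmod (U (S p)) <= (a p - a (S p)) * K) by (apply Rmult_le_compat_l; lra).
   lra. Qed.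

Lemma abel (a : nat -> R) (U : nat -> C) K :
  (forall i, 0 <= a (S i) <= a i) -> (forall i, Cmod (U i) <= K) -> U 0%nat = RtoC 0 ->
  forall n, Cmod (sumC n (fun i => Cmult (RtoC (a i)) (Cminus (U (S i)) (U i)))) <= a 0%nat * K.
Proof. intros Ha HU H0 n. assert (HK : 0 <= K) by (eapply Rle_trans; [apply Cmod_ge_0|apply (HU 0%nat)]).
 assert (Ha0 : 0 <= a 0%nat) by (specialize (Ha 0%nat); lra).
 destruct n. simpl. rewrite Cmod_0. nra.
 pose proof (abel_aux a U K Ha HU H0 n).
 set (X := sumC (S n) _) in *.
 replace X with (Cplus (Cminus X (Cmult (RtoC (a n)) (U (S n)))) (Cmult (RtoC (a n)) (U (S n)))) by (unfold Cminus; ring).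
 eapply Rle_trans. apply Cmod_triangle. rewrite Cmod_RtoC_mult.
 assert (0 <= a n). { clear -Ha. induction n. specialize (Ha 0%nat); lra. specialize (Ha n); lra. }
 rewrite Rabs_pos_eq by lra.
 assert (a n * Cmod (U (S n)) <= a n * K) by (apply Rmult_le_compat_l; auto). lra. Qed.
Open Scope R_scope.

Lemma fst_RtoC_mult r z : fst (Cmult (RtoC r) z) = r * fst z.
Proof. unfold Cmult, RtoC; simpl; ring. Qed.
Lemma snd_RtoC_mult r z : snd (Cmult (RtoC r) z) = r * snd z.
Proof. unfold Cmult, RtoC; simpl; ring. Qed.

Section F.
Variable m : nat -> nat.
Hypothesis Hm2 : forall k, (2 <= m k)%nat.
Variable q : nat -> R.
Hypothesis Hq0 : 0 < q 0%nat.
Hypothesis Hqnn : forall k, 0 <= q k.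
Hypothesis Hqmon : forall k, q k <= q (S k).

Lemma q_mono i j : (i <= j)%nat -> q i <= q j.
Proof. induction 1. lra. specialize (Hqmon m0); lra. Qed.

Lemma Qs_ge n : (1 <= n)%nat -> q 0%nat <= Qs q n.
Proof. induction 1. unfold Qs; simpl; lra. unfold Qs in *; simpl. specialize (Hqnn m0); lra. Qed.

Definition FC n y := Cmult (RtoC (/ Qs q n)) (sumC n (fun i => Cmult (RtoC (q (n - S i)%nat)) (DC m y (S i)))).

Lemma F_abs_FC n y : F_abs m q n y = Cmod (FC n y).
Proof. unfold F_abs, Cmod. f_equal. unfold FC, F_re, F_im. rewrite fst_RtoC_mult, snd_RtoC_mult.
 rewrite sumC_fst, sumC_snd. f_equal; f_equal; [f_equal|f_equal]; apply sumR_ext; intros i _;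
 rewrite ?fst_RtoC_mult, ?snd_RtoC_mult; f_equal; unfold DC;
 [rewrite sumC_fst|rewrite sumC_snd]; reflexivity. Qed.

Lemma Fabs_ii n y k : (1 <= n)%nat -> (0 < y k < m k)%nat -> F_abs m q n y <= INR (Mseq m (S k)).
Proof. intros Hn Hy. rewrite F_abs_FC. unfold FC. rewrite Cmod_RtoC_mult.
 pose proof (Qs_ge n Hn). rewrite Rabs_pos_eq by (left; apply Rinv_0_lt_compat; lra).
 eapply Rle_trans. apply Rmult_le_compat_l. left; apply Rinv_0_lt_compat; lra.
 eapply Rle_trans. apply Cmod_sumC. apply sumR_le. intros i _. rewrite Cmod_RtoC_mult.
 rewrite Rabs_pos_eq by auto. apply Rmult_le_compat_l. auto. apply (D_bound m Hm2 y k (S i) Hy).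
 rewrite (sumR_ext _ _ (fun i => INR (Mseq m (S k)) * q (n - S i)%nat)) by (intros; ring).
 rewrite sumR_scal, sumR_rev. fold (Qs q n). right. field. lra. Qed.

Lemma Fabs_i n y k l : (1 <= n)%nat -> (0 < y k < m k)%nat -> (0 < y l < m l)%nat -> (k < l)%nat ->
  F_abs m q n y <= q (n - 1)%nat / Qs q n * (INR (Mseq m (S l)) * INR (Mseq m (S k))).
Proof. intros Hn Hk Hl Hkl. rewrite F_abs_FC. unfold FC. rewrite Cmod_RtoC_mult.
 pose proof (Qs_ge n Hn). rewrite Rabs_pos_eq by (left; apply Rinv_0_lt_compat; lra).
 set (a := fun i => q (n - S i)%nat). set (U := fun i => TC m y (S i)).
 rewrite (sumC_ext _ _ (fun i => Cmult (RtoC (a i)) (Cminus (U (S i)) (U i)))).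
 2:{ intros i _. unfold a, U, TC. simpl sumC. f_equal. unfold Cminus; ring. }
 eapply Rle_trans. apply Rmult_le_compat_l. left; apply Rinv_0_lt_compat; lra.
 apply abel. intros i; unfold a; split. auto. apply q_mono; lia.
 intros i; unfold U. apply (T_bound m Hm2 y k l); auto.
 unfold U, TC, DC. simpl. ring.
 unfold a. replace (n - 1)%nat with (n - S 0)%nat by lia. right; unfold Rdiv; ring. Qed.
End F.
Open Scope R_scope.

Lemma subG_low m x t i : (forall k, (2 <= m k)%nat) -> (x i < m i)%nat -> t i = 0%nat -> subG m x t i = x i.
Proof. intros Hm2 Hx Ht. unfold subG. rewrite Ht, Nat.sub_0_r.
 replace (x i + m i)%nat with (x i + 1 * m i)%nat by lia. rewrite Nat.Div0.mod_add. apply Nat.mod_small; auto. Qed.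

Theorem mainTheorem6 (m : nat -> nat) (q : nat -> R)
  (Hm2 : forall k, (2 <= m k)%nat)
  (Hmb : exists B : nat, forall k, (m k <= B)%nat)
  (Hq0 : 0 < q 0%nat)
  (Hqnn : forall k, 0 <= q k)
  (Hqmon : forall k, q k <= q (S k))
  (HO : exists C : R, exists n0 : nat, forall n : nat, (n0 <= n)%nat -> (1 <= n)%nat ->
          Rabs (q (n - 1)%nat / Qs q n) <= C / INR n) :
  exists c : R, 0 < c /\
    forall N n : nat, (Mseq m N <= n)%nat ->
      (forall (k l : nat) (x : nat -> nat), inG m x ->
         (k + 2 <= N)%nat -> (k + 1 <= l)%nat -> (l + 1 <= N)%nat ->
         I_kl k l x ->
         intF m q N n x <= c * INR (Mseq m l) * INR (Mseq m k) / (INR n * INR (Mseq m N))) /\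
      (forall (k : nat) (x : nat -> nat), inG m x -> (k + 1 <= N)%nat ->
         I_kN N k x ->
         intF m q N n x <= c * INR (Mseq m k) / INR (Mseq m N)).
Proof.
 destruct Hmb as [B HB]. destruct HO as [C [n0 HC]].
 assert (HB2 : (2 <= B)%nat) by (specialize (HB 0%nat); specialize (Hm2 0%nat); lia).
 assert (HBr : 2 <= INR B) by (replace 2 with (INR 2) by (simpl; ring); apply le_INR; auto).
 pose proof (pos_INR n0) as Hn0.
 set (c := INR B * (1 + INR n0) + Rabs C * (INR B * INR B) + 1).
 assert (HCa := Rabs_pos C).
 assert (Hc : INR B <= c /\ INR B * INR n0 <= c /\ Rabs C * (INR B * INR B) <= c).
 { unfold c. split; [|split]; nra. }
 exists c. split. lra.
 intros N n HNn.
 assert (Hn : (1 <= n)%nat) by (pose proof (Mpos m Hm2 N); lia).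
 assert (Hnr : 0 < INR n) by (apply lt_0_INR; lia).
 assert (HMS : forall k, INR (Mseq m (S k)) <= INR B * INR (Mseq m k)).
 { intros k. simpl Mseq. rewrite mult_INR. apply Rmult_le_compat_r. apply pos_INR. apply le_INR; auto. }
 assert (HM1 : forall k, 1 <= INR (Mseq m k)).
 { intros k. replace 1 with (INR 1) by reflexivity. apply le_INR. apply Mpos; auto. }
 split.
 - intros k l x Hx Hk Hkl HlN [_ [Hxk [_ Hxl]]].
   assert (HMN := HM1 N).
   replace (c * INR (Mseq m l) * INR (Mseq m k) / (INR n * INR (Mseq m N)))
     with ((c * INR (Mseq m l) * INR (Mseq m k) / INR n) / INR (Mseq m N)) by (field; lra).
   assert (HMl := HM1 l). assert (HMk := HM1 k).
   apply intF_le; auto.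
   { apply Rdiv_le_0_compat; auto. assert (0 <= c) by lra. repeat apply Rmult_le_pos; lra. }
   intros t Ht. set (y := subG m x t).
   assert (Hyk : (0 < y k < m k)%nat).
   { unfold y. rewrite subG_low; [split; [lia|apply Hx]|..]; first [apply Ht; lia | apply Hx | auto]. }
   assert (Hyl : (0 < y l < m l)%nat).
   { unfold y. rewrite subG_low; [split; [lia|apply Hx]|..]; first [apply Ht; lia | apply Hx | auto]. }
   destruct (Nat.lt_ge_cases n n0) as [Hsm|Hbg].
   + eapply Rle_trans. apply (Fabs_ii m Hm2 q Hq0 Hqnn n y k Hn Hyk).
     eapply Rle_trans. apply HMS.
     apply Rmult_le_reg_r with (INR n); auto. replace (c * INR (Mseq m l) * INR (Mseq m k) / INR n * INR n) with (c * INR (Mseq m k) * INR (Mseq m l)) by (field; lra).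
     assert (INR n <= INR n0) by (apply le_INR; lia).
     assert (INR B * INR n <= c) by nra.
     assert (INR B * INR (Mseq m k) * INR n <= c * INR (Mseq m k)) by nra.
     assert (c * INR (Mseq m k) <= c * INR (Mseq m k) * INR (Mseq m l)).
     { rewrite <- (Rmult_1_r (c * INR (Mseq m k))) at 1. apply Rmult_le_compat_l; nra. }
     nra.
   + eapply Rle_trans. apply (Fabs_i m Hm2 q Hq0 Hqnn Hqmon n y k l Hn Hyk Hyl); lia.
     specialize (HC n Hbg Hn).
     assert (HQ : q (n - 1)%nat / Qs q n <= Rabs C / INR n).
     { eapply Rle_trans. apply Rle_abs. eapply Rle_trans. apply HC. unfold Rdiv.
       apply Rmult_le_compat_r. left; apply Rinv_0_lt_compat; auto. apply Rle_abs. }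
     assert (HQ0 : 0 <= q (n - 1)%nat / Qs q n).
     { apply Rdiv_le_0_compat; auto. pose proof (Qs_ge q Hqnn n Hn). lra. }
     pose proof (HMS l). pose proof (HMS k).
     assert (HK : INR (Mseq m (S l)) * INR (Mseq m (S k)) <= INR B * INR B * (INR (Mseq m l) * INR (Mseq m k))).
     { assert (0 <= INR (Mseq m (S l))) by apply pos_INR. assert (0 <= INR (Mseq m (S k))) by apply pos_INR. nra. }
     eapply Rle_trans. apply Rmult_le_compat. auto. apply Rmult_le_pos; apply pos_INR. apply HQ. apply HK.
     unfold Rdiv. rewrite (Rmult_comm c).
     assert (0 < / INR n) by (apply Rinv_0_lt_compat; auto).
     assert (Rabs C * (INR B * INR B) * (INR (Mseq m l) * INR (Mseq m k)) <= c * (INR (Mseq m l) * INR (Mseq m k))).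
     { apply Rmult_le_compat_r. nra. lra. }
     nra.
 - intros k x Hx HkN [_ [Hxk _]].
   replace (c * INR (Mseq m k) / INR (Mseq m N)) with ((c * INR (Mseq m k)) / INR (Mseq m N)) by reflexivity.
   assert (HMk := HM1 k).
   apply intF_le; auto. nra.
   intros t Ht. set (y := subG m x t).
   assert (Hyk : (0 < y k < m k)%nat).
   { unfold y. rewrite subG_low; [split; [lia|apply Hx]|..]; first [apply Ht; lia | apply Hx | auto]. }
   eapply Rle_trans. apply (Fabs_ii m Hm2 q Hq0 Hqnn n y k Hn Hyk).
   eapply Rle_trans. apply HMS. nra.
Qed.
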